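(* Let $S$ be an instance of 3-Partition (with $n_1\ge\cdots\ge n_{3m}$), let $1\le k\le 3m$, let $i_1,\dots,i_{3m-k+1}$ be natural numbers and $W=\prod_{j=1}^{3m-k+1}(a_1b^{i_j}a_2)$. Suppose an accepting computation of $w_S$ satisfying the V-Condition contains a subcomputation $$W\,\|\,v_{4k-3}D_kv_{4k-3}\,v_{4k-2}D_kv_{4k-2}\,T \;\vdash^*\; W'\,\|\,T,$$ where $T$ denotes the rest of the input string. Then $W'=W$ and $i_j\le n_k$ for all $j$. Conversely, if $i_j\le n_k$ for all $j$, then for any string $T$ there is a computation $W\,\|\,v_{4k-3}D_kv_{4k-3}\,v_{4k-2}D_kv_{4k-2}\,T\vdash^* W\,\|\,T$.
   Context: Queue automaton: a configuration is written $Q\,\|\,x$ ($Q$ = queue contents, $x$ = remaining input); a step from $Q\,\|\,\sigma x$ ($\sigma$ a symbol) goes either to $Q\sigma\,\|\,x$ (push the input symbol) or, if $Q=\sigma Q'$, to $Q'\,\|\,x$ (the input symbol is matched against the leftmost queue symbol, which is popped; that queue symbol was pushed from an earlier input position, and we say these two input occurrences are matched). $\vdash^*$ is zero or more steps; $\varepsilon$ is the empty string; an accepting computation of $w$ is a computation $\varepsilon\,\|\,w\vdash^*\varepsilon\,\|\,\varepsilon$. An instance of 3-Partition is a sequence $S=\langle n_i:1\le i\le 3m\rangle$ of natural numbers such that $B=(\sum_{i=1}^{3m}n_i)/m$ is an integer and $B/4<n_i<B/2$ for all $i$; throughout, the $n_i$ are in non-increasing order. Alphabet $\{a_1,a_2,b,e_0,e,c_1,c_2,x,y\}$;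 $u^i$ is $i$ copies of $u$ concatenated, $\prod_{\ell=1}^k u_\ell=u_1\cdots u_k$. Define $U_\ell=a_1^2b^\ell a_2^2$, $v_\ell=c_1x^\ell y^\ell c_2$, $D_k=U_{n_k}^{3m-k+1}$, $E_k=U_B^{3m-k}\,a_1b^{n_k}a_2\,U_B^{3m-k}$, $F_k=U_B^{2(3m-k)}$, $\mathrm{Load}_S=e_0\prod_{i=1}^m(b^{2B}e)$, $\mathrm{Dist}_S=e_0\prod_{i=1}^m((a_1b^Ba_2)^3e)$, $\mathrm{Ver}_S=\prod_{k=1}^{3m}[v_{4k-3}D_kv_{4k-3}\,v_{4k-2}D_kv_{4k-2}\,v_{4k-1}E_kv_{4k-1}\,v_{4k}F_kv_{4k}]$, $w_S=\mathrm{Load}_S\mathrm{Dist}_S\mathrm{Ver}_S$. Each $v_\ell$ ($1\le\ell\le12m$) occurs exactly twice in $w_S$. An accepting computation of $w_S$ satisfies the V-Condition if for each $\ell$ with $1\le\ell\le 12m$, the symbols of the second occurrence of $v_\ell$ in $w_S$ are all matched against the corresponding symbols of the first occurrence of $v_\ell$ in $w_S$. *)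

(* Defs.v *)
From HB Require Import structures.
From mathcomp Require Import all_boot.
Set Implicit Arguments. Unset Strict Implicit. Unset Printing Implicit Defensive.

Inductive sym := a1 | a2 | sb | se0 | se | c1 | c2 | sx | sy.
Definition sym_eq_dec : comparable sym. Proof. move=> u v; rewrite /decidable; decide equality. Defined.
HB.instance Definition _ := comparableMixin sym_eq_dec.

Notation word := (seq sym).

Definition wpow (u : word) (i : nat) : word := flatten (nseq i u).
Definition wprod (k : nat) (u : nat -> word) : word := flatten [seq u l | l <- iota 1 k].

Definition nS (S : seq nat) (i : nat) : nat := nth 0 S i.-1.
Definition Bof (m : nat) (S : seq nat) : nat := sumn S %/ m.

(* An instance of 3-Partition with the n_i in non-increasing order;
   B/4 < n_i < B/2 is written 4 n_i > B and 2 n_i < B. *)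
Definition is3Part (m : nat) (S : seq nat) : Prop :=
  [/\ 0 < m, size S = 3 * m, m %| sumn S,
      sorted geq S &
      forall i, 1 <= i <= 3 * m -> Bof m S < 4 * nS S i /\ 2 * nS S i < Bof m S].

Definition Uw (l : nat) : word := [:: a1; a1] ++ nseq l sb ++ [:: a2; a2].
Definition vw (l : nat) : word := [:: c1] ++ nseq l sx ++ nseq l sy ++ [:: c2].

Section Strings.
Variables (m : nat) (S : seq nat).
Local Notation B := (Bof m S).
Local Notation n := (nS S).

Definition Dw (k : nat) : word := wpow (Uw (n k)) (3 * m - k + 1).
Definition Ew (k : nat) : word :=
  wpow (Uw B) (3 * m - k) ++ [:: a1] ++ nseq (n k) sb ++ [:: a2] ++ wpow (Uw B) (3 * m - k).
Definition Fw (k : nat) : word := wpow (Uw B) (2 * (3 * m - k)).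
Definition Load : word := se0 :: wprod m (fun _ => nseq (2 * B) sb ++ [:: se]).
Definition Dist : word :=
  se0 :: wprod m (fun _ => wpow ([:: a1] ++ nseq B sb ++ [:: a2]) 3 ++ [:: se]).
Definition Ver : word :=
  wprod (3 * m) (fun k =>
    vw (4 * k - 3) ++ Dw k ++ vw (4 * k - 3) ++
    vw (4 * k - 2) ++ Dw k ++ vw (4 * k - 2) ++
    vw (4 * k - 1) ++ Ew k ++ vw (4 * k - 1) ++
    vw (4 * k) ++ Fw k ++ vw (4 * k)).
Definition wS : word := Load ++ Dist ++ Ver.
End Strings.

Definition config := (word * word)%type.

Inductive step : config -> config -> Prop :=
| step_push (Q : word) (s : sym) (x : word) : step (Q, s :: x) (rcons Q s, x)
| step_pop (Q : word) (s : sym) (x : word) : step (s :: Q, s :: x) (Q, x).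

Inductive steps : config -> config -> Prop :=
| steps_refl c : steps c c
| steps_cons c1 c2 c3 : step c1 c2 -> steps c2 c3 -> steps c1 c3.

(* ---------- computations with matching information ----------
   A computation of w is given by the queue contents at each time t
   (0 <= t <= |w|), where each queue entry is recorded by the input
   position (0-based) from which it was pushed.  Step t consumes input symbol
   at position t, either pushing it, or popping the front queue symbol
   (pushed from position q), in which case positions q and t are matched. *)
Definition queue_at (w : word) (tq : nat -> seq nat) (t : nat) : word :=
  map (fun p => nth a1 w p) (tq t).

Definition config_at (w : word) (tq : nat -> seq nat) (t : nat) : config :=
  (queue_at w tq t, drop t w).

Definition valid_step (w : word) (tq : nat -> seq nat) (t : nat) : Prop :=
  tq t.+1 = rcons (tq t) t \/
  exists q, tq t = q :: tq t.+1 /\ nth a1 w q = nth a1 w t.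

Definition accepting (w : word) (tq : nat -> seq nat) : Prop :=
  [/\ tq 0 = [::], tq (size w) = [::] &
      forall t, t < size w -> valid_step w tq t].

Definition matched (tq : nat -> seq nat) (p q : nat) : Prop :=
  tq q = p :: tq q.+1.

Definition occurs_at (w v : word) (s : nat) : bool := take (size v) (drop s w) == v.
Definition first_occ (w v : word) : nat := find (occurs_at w v) (iota 0 (size w)).
Definition second_occ (w v : word) : nat :=
  (first_occ w v).+1 + find (occurs_at w v) (iota (first_occ w v).+1 (size w)).

Definition VCondition (m : nat) (S : seq nat) (tq : nat -> seq nat) : Prop :=
  forall l, 1 <= l <= 12 * m ->
    forall i, i < size (vw l) ->
      matched tq (first_occ (wS m S) (vw l) + i) (second_occ (wS m S) (vw l) + i).

Definition Ww (ii : seq nat) : word := flatten [seq [:: a1] ++ nseq i sb ++ [:: a2] | i <- ii].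

Definition Xw (m : nat) (S : seq nat) (k : nat) : word :=
  vw (4 * k - 3) ++ Dw m S k ++ vw (4 * k - 3) ++ vw (4 * k - 2) ++ Dw m S k ++ vw (4 * k - 2).

(* Main.v *)
Require Import Defs.
From HB Require Import structures.
From mathcomp Require Import all_boot.
From mathcomp Require Import zify.
Set Implicit Arguments. Unset Strict Implicit.

Lemma all_push (w : word) tq s1 (u : word) (Q : seq nat) q0 :
  (forall j, j < size u -> nth a1 w (s1 + j) = nth a1 u j) ->
  (forall j, j < size u -> valid_step w tq (s1 + j)) ->
  tq s1 = q0 :: Q -> nth a1 w q0 \notin u ->
  forall j, j <= size u -> tq (s1 + j) = q0 :: Q ++ iota s1 j.
Proof.
move=> Hw Hv H0 Hq0; elim=> [|j IH] Hj; first by rewrite addn0 H0 cats0.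
case: (Hv j Hj) => [Hp | [q [Hp Hs]]].
- by rewrite addnS Hp IH ?(ltnW Hj) // -[j.+1]addn1 iotaD cats1 rcons_cons rcons_cat.
- rewrite IH ?(ltnW Hj) // in Hp; case: Hp => Hq _; subst q.
  by move: Hq0; rewrite Hs Hw // mem_nth.
Qed.

Lemma vcond_pops tq s0 s2 a :
  (forall i, i < a -> tq (s2 + i) = (s0 + i) :: tq (s2 + i).+1) ->
  tq s2 = iota s0 a ++ tq (s2 + a).
Proof.
move=> H.
suff: forall j, j <= a -> tq s2 = iota s0 j ++ tq (s2 + j) by apply.
elim=> [|j IH] Hj; first by rewrite addn0.
by rewrite IH ?(ltnW Hj) // H // addnS -[j.+1]addn1 iotaD -catA.
Qed.

Lemma D_phase (w : word) tq s1 (D : word) (X : seq nat) v0 V' (R : seq nat) :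
 (forall j, j < size D -> nth a1 w (s1 + j) = nth a1 D j) ->
 (forall j, j < size D -> valid_step w tq (s1 + j)) ->
 tq s1 = X ++ v0 :: V' -> tq (s1 + size D) = v0 :: V' ++ R ->
 nth a1 w v0 \notin D -> nth a1 w v0 \notin map (nth a1 w) X ->
 exists m, [/\ size m = size D, mask m D = map (nth a1 w) X &
                mask (map negb m) D = map (nth a1 w) R].
Proof.
move=> Hw Hv H0 H1 HD HX.
have Inv : forall j, j <= size D -> exists m j' Rs, [/\ size m = j,
   tq (s1 + j) = drop j' X ++ v0 :: V' ++ Rs,
   mask m (take j D) = map (nth a1 w) (take j' X) &
   mask (map negb m) (take j D) = map (nth a1 w) Rs].
  elim=> [|j IH] Hj.
    by exists [::], 0, [::]; split; rewrite ?addn0 ?H0 ?drop0 ?take0 ?cats0.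
  have [m [j' [Rs [Hsm Htq Hm1 Hm2]]]] := IH (ltnW Hj).
  have Hj' := Hj.
  have Hst : size m = size (take j D) by rewrite size_take Hj'.
  rewrite (take_nth a1 Hj').
  case: (Hv j Hj') => [Hp | [q [Hp Hs]]].
  - exists (rcons m false), j', (rcons Rs (s1 + j)); split.
    + by rewrite size_rcons Hsm.
    + by rewrite addnS Hp Htq rcons_cat rcons_cons rcons_cat.
    + by rewrite mask_rcons // cats0.
    + by rewrite map_rcons mask_rcons ?size_map // Hm2 map_rcons Hw // cats1.
  - rewrite Htq in Hp.
    case Hdr: (drop j' X) => [|y X''].
    + rewrite Hdr /= in Hp; case: Hp => Hq _; subst q.
      by move: HD; rewrite Hs Hw // mem_nth.
    + rewrite Hdr /= in Hp; case: Hp => Hq Hp; subst q.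
      have Hsz : j' < size X.
        by rewrite ltnNge -subn_eq0 -size_drop Hdr.
      have Hy : nth 0 X j' = y by rewrite -[j']addn0 -nth_drop Hdr.
      exists (rcons m true), j'.+1, Rs; split.
      * by rewrite size_rcons Hsm.
      * by rewrite addnS -Hp -add1n -drop_drop Hdr drop1.
      * by rewrite mask_rcons // Hm1 (take_nth 0 Hsz) map_rcons Hy Hs Hw // cats1.
      * by rewrite map_rcons mask_rcons ?size_map // cats0.
have [m [j' [Rs [Hsm Htq Hm1 Hm2]]]] := Inv (size D) (leqnn _).
rewrite take_size in Hm1 Hm2.
case Hdr: (drop j' X) => [|y X''].
- have Hle : size X <= j' by rewrite -subn_eq0 -size_drop Hdr.
  rewrite take_oversize // in Hm1.
  rewrite Hdr /= H1 in Htq; case: Htq => Htq.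
  have := f_equal (drop (size V')) Htq; rewrite !drop_size_cat // => ->.
  by exists m.
- rewrite Hdr /= H1 in Htq; case: Htq => Hy _; subst y.
  have : v0 \in X by rewrite -(cat_take_drop j' X) mem_cat Hdr mem_head orbT.
  by move=> /(map_f (nth a1 w)); rewrite (negbTE HX).
Qed.


Definition A4 : word := [:: a1; a1; a2; a2].
Definition proj (w : word) : word := filter (fun s => s != sb) w.

Lemma wpowS u r : wpow u r.+1 = u ++ wpow u r.
Proof. by []. Qed.

Lemma proj_wpowU n r : proj (wpow (Uw n) r) = wpow A4 r.
Proof.
elim: r => [|r IH] //; rewrite !wpowS -IH /proj filter_cat.
by rewrite /Uw /= filter_cat filter_nseq.
Qed.

Lemma proj_Ww jj : proj (Ww jj) = wpow [:: a1; a2] (size jj).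
Proof.
elim: jj => [|j jj IH] //=; rewrite wpowS -IH /Ww /= /proj /=.
by rewrite !filter_cat filter_nseq.
Qed.

Lemma P_lem r : ~~ subseq (wpow [:: a1; a2] r.+1) (wpow A4 r).
Proof.
elim: r => [|r IH] //.
Qed.

Lemma Q_lem r : ~~ subseq (a2 :: wpow [:: a1; a2] r) (wpow A4 r).
Proof. by case: r => [|r] //; rewrite [wpow A4 _]wpowS /=; apply: P_lem. Qed.

Lemma subseq_proj s1 s2 : subseq s1 s2 -> subseq (proj s1) (proj s2).
Proof.
move=> H; rewrite /proj subseq_filter filter_all /=.
exact: subseq_trans (filter_subseq _ _) H.
Qed.

Lemma mask_nseq (mb : bitseq) (z : sym) :
  mask mb (nseq (size mb) z) = nseq (count id mb) z /\
  mask (map negb mb) (nseq (size mb) z) = nseq (size mb - count id mb) z.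
Proof.
elim: mb => [|x mb [IH1 IH2]] //=; rewrite IH1 IH2; case: x => //=.
by rewrite add0n subSn ?count_size.
Qed.

Lemma shapeU n (m1 : bitseq) : size m1 = size (Uw n) ->
  exists p q s, [/\ p <= 2, q <= n, s <= 2,
     mask m1 (Uw n) = nseq p a1 ++ nseq q sb ++ nseq s a2 &
     mask (map negb m1) (Uw n) = nseq (2 - p) a1 ++ nseq (n - q) sb ++ nseq (2 - s) a2].
Proof.
rewrite /Uw /= size_cat size_nseq => Hs.
case: m1 Hs => [|x1 [|x2 rest]] //= [] Hs.
have Hsz : size (take n rest) = n by rewrite size_take Hs; case: ifP; lia.
have Hd : size (drop n rest) = 2 by rewrite size_drop Hs; lia.
rewrite -(cat_take_drop n rest).
move: (take n rest) (drop n rest) Hsz Hd => mb [|y1 [|y2 [|y3 z]]] Hsz Hd //; clear Hd.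
have [H1 H2] := mask_nseq mb sb.
rewrite Hsz in H1 H2.
rewrite map_cat !mask_cat ?size_map ?Hsz ?size_nseq // H1 H2.
exists (x1 + x2), (count id mb), (y1 + y2); split.
- by case: x1; case: x2.
- by rewrite -[X in _ <= X]Hsz count_size.
- by case: y1; case: y2.
- by case: x1; case: x2; case: y1; case: y2.
- by case: x1; case: x2; case: y1; case: y2.
Qed.

Lemma nth3a p q s k : p + q <= k < p + q + s ->
  nth a1 (nseq p a1 ++ nseq q sb ++ nseq s a2) k = a2.
Proof.
move=> /andP[H1 H2]; rewrite nth_cat size_nseq.
have -> : (k < p) = false by lia.
rewrite nth_cat size_nseq.
have -> : (k - p < q) = false by lia.
rewrite nth_nseq.
have -> : (k - p - q < s) = true by lia.
by [].
Qed.

Lemma nth3b p q s k : nth a1 (nseq p a1 ++ nseq q sb ++ nseq s a2) k = a2 -> p + q <= k.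
Proof.
rewrite nth_cat size_nseq; case: ifP => H1; first by rewrite nth_nseq H1.
rewrite nth_cat size_nseq; case: ifP => H2; first by rewrite nth_nseq H2.
move=> _; lia.
Qed.

Lemma comb n jj m : size m = size (wpow (Uw n) (size jj)) ->
  mask m (wpow (Uw n) (size jj)) = Ww jj ->
  (forall j, j \in jj -> j <= n) /\
  mask (map negb m) (wpow (Uw n) (size jj)) = Ww [seq n - j | j <- jj].
Proof.
elim: jj m => [|i jj IH] m Hsz Hm.
  by split => //; case: m {Hsz Hm}.
rewrite wpowS in Hsz Hm *.
set U := Uw n in Hsz Hm *; set D' := wpow U (size jj) in Hsz Hm *.
rewrite size_cat in Hsz.
have Hs1 : size (take (size U) m) = size U by rewrite size_take Hsz; case: ifP; lia.
have Hs2 : size (drop (size U) m) = size D' by rewrite size_drop Hsz; lia.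
rewrite -(cat_take_drop (size U) m) in Hm *.
move: (take (size U) m) (drop (size U) m) Hs1 Hs2 Hm => m1 m2 Hs1 Hs2 Hm.
rewrite mask_cat // in Hm; rewrite map_cat mask_cat ?size_map //.
have [p [q [s [Hp Hq Hs Hm1 Hn1]]]] := shapeU Hs1.
have HW : Ww (i :: jj) = (a1 :: nseq i sb) ++ a2 :: Ww jj by rewrite /Ww /= -catA.
rewrite HW in Hm.
set P := mask m1 U in Hm Hm1.
have HL : size P = p + q + s by rewrite Hm1 !size_cat !size_nseq addnA.
have HR : mask m2 D' = drop (size P) ((a1 :: nseq i sb) ++ a2 :: Ww jj)
  by rewrite -Hm drop_size_cat.
case: (ltngtP (size P) (i.+2)) => Hc.
- exfalso.
  rewrite drop_cat /= size_nseq in HR.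
  have Hsub : subseq (a2 :: Ww jj) D'.
    case: ifP HR => Hc' HR.
      apply: (subseq_trans (suffix_subseq (drop (size P) (a1 :: nseq i sb)) _)).
      by rewrite -HR mask_subseq.
    have E0 : size P - i.+1 = 0 by lia.
    by rewrite E0 drop0 in HR; rewrite -HR mask_subseq.
  move/subseq_proj: Hsub; rewrite /D' /U proj_wpowU /= proj_Ww.
  by apply/negP; apply: Q_lem.
- exfalso.
  have HszT := f_equal size Hm; rewrite !size_cat /= size_nseq in HszT.
  have Ht : forall k, k < size P -> nth a1 P k = nth a1 ((a1 :: nseq i sb) ++ a2 :: Ww jj) k.
    by move=> k Hk; rewrite -Hm nth_cat Hk.
  case E: jj HszT Hm => [|j0 jj'] HszT Hm.
    by rewrite /Ww /= in HszT; lia.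
  have E1 : nth a1 P i.+1 = a2.
    by rewrite Ht ?(ltnW Hc) // nth_cat /= size_nseq ltnn subnn.
  have E2 : nth a1 P i.+2 = a1.
    rewrite Ht // nth_cat /= size_nseq.
    by rewrite ltnNge leqnSn /= subSn // subnn E.
  rewrite Hm1 in E1 E2.
  have H3 := nth3b E1.
  rewrite nth3a in E2 => //; lia.
- have HP : P = a1 :: nseq i sb ++ [:: a2].
    by rewrite -(take_size_cat (mask m2 D') (erefl (size P))) Hm Hc take_cat /= size_nseq ltnNge leqnSn /= subSS subSn // subnn /= take0.
  have Hc1 := f_equal (count (pred1 a1)) HP.
  have Hc2 := f_equal (count (pred1 sb)) HP.
  have Hc3 := f_equal (count (pred1 a2)) HP.
  rewrite Hm1 /= !count_cat !count_nseq /= in Hc1 Hc2 Hc3.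
  rewrite Hc /= drop_cat size_nseq ltnNge leqnSn /= subSn // subnn /= drop0 in HR.
  rewrite Hm1 in HP.
  have Hmw : mask m2 D' = Ww jj by rewrite HR.
  have [IH1 IH2] := IH m2 Hs2 Hmw.
  split.
    move=> j; rewrite inE => /orP [/eqP -> | /IH1 //]; lia.
  rewrite Hn1 IH2 /Ww /=.
  have -> : p = 1 by lia.
  have -> : s = 1 by lia.
  have -> : q = i by lia.
  by [].
Qed.


Lemma occ_nth w v p j : occurs_at w v p -> j < size v -> nth a1 w (p + j) = nth a1 v j.
Proof. by move=> /eqP H Hj; rewrite -[in RHS]H nth_take // nth_drop. Qed.

Lemma occ_size w v p : 0 < size v -> occurs_at w v p -> p + size v <= size w.
Proof.
move=> Hv /eqP H; have := f_equal size H; rewrite size_take size_drop.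
case: ifP => H1 H2; clear H; simpl in *; lia.
Qed.

Lemma occ_intro w v p T : drop p w = v ++ T -> occurs_at w v p.
Proof. by move=> H; rewrite /occurs_at H take_size_cat. Qed.

Lemma size_vw l : size (vw l) = (2 * l).+2.
Proof. rewrite /vw /= !size_cat !size_nseq /=; lia. Qed.

Lemma nth_vw0 l : nth a1 (vw l) 0 = c1.
Proof. by []. Qed.

Lemma nth_vw_c1 l j : nth a1 (vw l) j = c1 -> j = 0.
Proof.
case: j => [|j] //=; rewrite nth_cat size_nseq; case: ifP => H.
  by rewrite nth_nseq H.
rewrite nth_cat size_nseq; case: ifP => H2; first by rewrite nth_nseq H2.
by case: (j - l - l) => [|[]].
Qed.

Lemma nth_vw_x l j : 0 < j <= l -> nth a1 (vw l) j = sx.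
Proof. by case: j => [|j] //= H; rewrite nth_cat size_nseq H nth_nseq H. Qed.

Lemma nth_vw_nx l : nth a1 (vw l) l.+1 <> sx.
Proof.
rewrite /= nth_cat size_nseq ltnn subnn.
by case: l => [|l] //=.
Qed.

Definition good (u : word) := c1 \notin u \/ exists l, u = vw l.

Lemma occ_piece ps l p : (forall u, u \in ps -> good u) ->
  occurs_at (flatten ps) (vw l) p ->
  exists2 i, i < size ps & nth [::] ps i = vw l /\ p = sumn (map size (take i ps)).
Proof.
elim: ps p => [|u ps IH] p Hg Hocc.
  have Hv : 0 < size (vw l) by rewrite size_vw.
  by have := occ_size Hv Hocc; rewrite size_vw /=; lia.
have Hc1 := occ_nth Hocc (ltn0Sn _); rewrite addn0 /= in Hc1.
case: (ltnP p (size u)) => Hp.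
- rewrite nth_cat Hp in Hc1.
  case: (Hg u (mem_head _ _)) => [Hn | [l' Hu]].
    by rewrite -Hc1 mem_nth in Hn.
  subst u; have p0 := nth_vw_c1 Hc1; subst p.
  have Hl : l' = l.
    have Hj : forall j, j < size (vw l) -> j < size (vw l') ->
        nth a1 (vw l) j = nth a1 (vw l') j.
      have Ef : flatten (vw l' :: ps) = vw l' ++ flatten ps by [].
      by move=> j H1 H2; rewrite -(occ_nth Hocc H1) Ef add0n nth_cat H2.
    case: (ltngtP l l') => H //.
    + have := Hj l.+1; rewrite !size_vw (nth_vw_x (l := l') (j := l.+1)); last by lia.
      by move=> E; exfalso; apply: (@nth_vw_nx l); apply: E; lia.
    + have := Hj l'.+1; rewrite !size_vw (nth_vw_x (l := l)); last by lia.
      by move=> E; exfalso; apply: (@nth_vw_nx l'); symmetry; apply: E; lia.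
  by subst l'; exists 0.
- have Hocc' : occurs_at (flatten ps) (vw l) (p - size u).
    by move: Hocc; rewrite /occurs_at /= drop_cat ltnNge Hp.
  have Hg' : forall u, u \in ps -> good u by move=> x Hx; apply: Hg; rewrite inE Hx orbT.
  have [i Hi [Hn Hpi]] := IH _ Hg' Hocc'.
  exists i.+1 => //; split => //=; simpl in *; lia.
Qed.

Lemma nth_in (s : seq word) k l : nth [::] s k = vw l -> vw l \in s.
Proof.
case: (ltnP k (size s)) => H Hn; first by rewrite -Hn mem_nth.
by rewrite nth_default in Hn.
Qed.

Lemma two_occ pre mid post l :
  (forall u, u \in pre ++ vw l :: mid ++ vw l :: post -> good u) ->
  vw l \notin pre -> vw l \notin mid -> vw l \notin post ->
  exists P1 P2, forall p, occurs_at (flatten (pre ++ vw l :: mid ++ vw l :: post)) (vw l) p ->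
     p = P1 \/ p = P2.
Proof.
set ps := pre ++ _.
move=> Hg H1 H2 H3.
exists (sumn (map size (take (size pre) ps))),
       (sumn (map size (take (size pre + (size mid).+1) ps))).
move=> p /(occ_piece Hg) [i Hi [Hn ->]].
move: Hn; rewrite nth_cat; case: ifP => Hi1.
  by move/nth_in; rewrite (negbTE H1).
case E: (i - size pre) => [|i'] /=.
  by left; congr (sumn (map size (take _ _))); move: Hi1 E => /= Hi1 E; lia.
rewrite nth_cat; case: ifP => Hi2.
  by move/nth_in; rewrite (negbTE H2).
case E2: (i' - size mid) => [|i''] /=.
  by right; congr (sumn (map size (take _ _))); move: Hi1 Hi2 E E2 => /= Hi1 Hi2 E E2; lia.
by move/nth_in; rewrite (negbTE H3).
Qed.

Lemma find_iota (a : pred nat) s n q : s <= q < s + n -> a q ->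
  (forall p, s <= p < q -> ~~ a p) -> find a (iota s n) = q - s.
Proof.
elim: n s => [|n IH] s Hq Haq Hb; first by lia.
rewrite /=; case: ifP => Has.
  case: (ltngtP s q) => H; first by move: (Hb s); rewrite Has leqnn H; move/(_ isT).
    by lia.
  by rewrite H subnn.
rewrite IH //.
- have : s != q by apply/eqP => E; rewrite E Haq in Has.
  lia.
- have : s != q by apply/eqP => E; rewrite E Haq in Has.
  lia.
- move=> p Hp; apply: Hb; lia.
Qed.


Lemma fl_cons (T : Type) (x : seq T) s : flatten (x :: s) = x ++ flatten s.
Proof. by []. Qed.

Section Pieces.
Variables (m : nat) (S : seq nat).

Definition blk (k : nat) : seq word :=
  [:: vw (4*k-3); Dw m S k; vw (4*k-3); vw (4*k-2); Dw m S k; vw (4*k-2);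
      vw (4*k-1); Ew m S k; vw (4*k-1); vw (4*k); Fw m S k; vw (4*k)].
Definition pcs (ks : seq nat) : seq word := flatten [seq blk k | k <- ks].

Lemma pcs_cat xs ys : pcs (xs ++ ys) = pcs xs ++ pcs ys.
Proof. by rewrite /pcs map_cat flatten_cat. Qed.

Lemma wS_pieces : wS m S = flatten (Defs.Load m S :: Dist m S :: pcs (iota 1 (3 * m))).
Proof.
rewrite /wS /Ver /wprod !fl_cons; congr (_ ++ (_ ++ _)).
elim: (iota 1 (3 * m)) => [|k ks IH] //.
rewrite map_cons fl_cons /pcs map_cons fl_cons flatten_cat -/(pcs ks) -IH.
by rewrite /blk !fl_cons /flatten /= cats0.
Qed.

Lemma notc1_wpow u i : (c1 \in u) = false -> (c1 \in wpow u i) = false.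
Proof. by move=> H; apply/negP => /flattenP [s /nseqP [-> _]]; rewrite H. Qed.

Lemma notc1_wprod k f : (forall l, (c1 \in f l) = false) -> (c1 \in wprod k f) = false.
Proof. by move=> H; apply/negP => /flattenP [s /mapP [l _ ->]]; rewrite H. Qed.

Lemma notc1_U n : (c1 \in Uw n) = false.
Proof. by rewrite /Uw !mem_cat mem_nseq !inE andbF. Qed.

Lemma notc1_Load : (c1 \in Defs.Load m S) = false.
Proof.
rewrite /Defs.Load inE /=; apply: notc1_wprod => l.
by rewrite mem_cat mem_nseq !inE andbF.
Qed.

Lemma notc1_Dist : (c1 \in Dist m S) = false.
Proof.
rewrite /Dist inE /=; apply: notc1_wprod => l.
by rewrite !(inE, mem_cat, mem_nseq, andbF).
Qed.

Lemma notc1_D k : (c1 \in Dw m S k) = false.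
Proof. exact/notc1_wpow/notc1_U. Qed.

Lemma notc1_E k : (c1 \in Ew m S k) = false.
Proof. by rewrite /Ew !mem_cat !notc1_wpow ?notc1_U // mem_nseq !inE andbF. Qed.

Lemma notc1_F k : (c1 \in Fw m S k) = false.
Proof. exact/notc1_wpow/notc1_U. Qed.

Lemma vw_neq_plain u l : (c1 \in u) = false -> (vw l == u) = false.
Proof. by move=> H; apply/eqP => E; rewrite -E inE eqxx in H. Qed.

Lemma vw_inj l l' : (vw l == vw l') = (l == l').
Proof.
apply/eqP/eqP => [E|->] //; have := f_equal size E; rewrite !size_vw; lia.
Qed.

Lemma good_cons u s : good u -> (forall x, x \in s -> good x) -> forall x, x \in u :: s -> good x.
Proof. by move=> Hu Hs x; rewrite inE => /orP [/eqP -> | /Hs]. Qed.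

Lemma good_blk k : forall u, u \in blk k -> good u.
Proof.
rewrite /blk.
do 12 (apply: good_cons; [ first [ by right; eexists | by left; rewrite ?notc1_D ?notc1_E ?notc1_F ] | ]).
by [].
Qed.

Lemma good_all ks : forall u, u \in Defs.Load m S :: Dist m S :: pcs ks -> good u.
Proof.
apply: good_cons; first by left; rewrite notc1_Load.
apply: good_cons; first by left; rewrite notc1_Dist.
by move=> u /flattenP [s /mapP [k _ ->]]; apply: good_blk.
Qed.

Lemma notin_blk l k : l != 4*k-3 -> l != 4*k-2 -> l != 4*k-1 -> l != 4*k ->
  vw l \notin blk k.
Proof.
move=> H1 H2 H3 H4.
rewrite /blk !inE !vw_inj !vw_neq_plain ?notc1_D ?notc1_E ?notc1_F //.
by move: H1 H2 H3 H4; case: (l == 4*k-3); case: (l == 4*k-2); case: (l == 4*k-1); case: (l == 4*k).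
Qed.

Lemma notin_pcs l ks : (forall k, k \in ks ->
   [/\ l != 4*k-3, l != 4*k-2, l != 4*k-1 & l != 4*k]) -> vw l \notin pcs ks.
Proof.
move=> H; apply/negP => /flattenP [s /mapP [k Hk ->]].
by case: (H k Hk) => H1 H2 H3 H4; apply/negP; apply: notin_blk.
Qed.

End Pieces.


Lemma neq_lia (a b : nat) : a <> b -> a != b.
Proof. by move=> H; apply/eqP. Qed.

Lemma occ_wS m S k l : 1 <= k <= 3 * m -> (l = 4 * k - 3 \/ l = 4 * k - 2) ->
  exists P1 P2, forall p, occurs_at (wS m S) (vw l) p -> p = P1 \/ p = P2.
Proof.
move=> Hk Hl.
have Hi : iota 1 (3 * m) = iota 1 (k - 1) ++ k :: iota k.+1 (3 * m - k).
  have -> : iota 1 (3 * m) = iota 1 ((k - 1) + (3 * m - k).+1) by congr iota; lia.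
  rewrite iotaD; have -> : 1 + (k - 1) = k by lia.
  by [].
have Hxs : vw l \notin pcs m S (iota 1 (k - 1)).
  apply: notin_pcs => k'; rewrite mem_iota => Hk'.
  by split; apply: neq_lia; lia.
have Hys : vw l \notin pcs m S (iota k.+1 (3 * m - k)).
  apply: notin_pcs => k'; rewrite mem_iota => Hk'.
  by split; apply: neq_lia; lia.
have HL : vw l \notin [:: Defs.Load m S; Dist m S].
  by rewrite !inE !vw_neq_plain ?notc1_Load ?notc1_Dist.
rewrite wS_pieces Hi pcs_cat.
have Epc : pcs m S (k :: iota k.+1 (3 * m - k)) = blk m S k ++ pcs m S (iota k.+1 (3 * m - k)) by [].
rewrite Epc.
set xs := pcs m S (iota 1 (k - 1)) in Hxs *.
set ys := pcs m S (iota k.+1 (3 * m - k)) in Hys *.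
have Hg := @good_all m S (iota 1 (3 * m)).
rewrite Hi pcs_cat Epc -/xs -/ys in Hg.
case: Hl => Hl.
- have Eps : Defs.Load m S :: Dist m S :: (xs ++ (blk m S k ++ ys)) =
     (Defs.Load m S :: Dist m S :: xs) ++ vw l :: [:: Dw m S k] ++ vw l :: (drop 3 (blk m S k) ++ ys).
    by rewrite Hl.
  rewrite Eps; apply: two_occ.
  + by move=> u; rewrite -Eps; apply: Hg.
  + by rewrite (_ : Defs.Load m S :: Dist m S :: xs = [:: Defs.Load m S; Dist m S] ++ xs) // mem_cat negb_or HL.
  + by rewrite inE vw_neq_plain ?notc1_D.
  + rewrite mem_cat negb_or Hys andbT /blk /= !inE !vw_inj !vw_neq_plain ?notc1_D ?notc1_E ?notc1_F //.
    have H2 : l != 4 * k - 2 by apply: neq_lia; lia.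
    have H3 : l != 4 * k - 1 by apply: neq_lia; lia.
    have H4 : l != 4 * k by apply: neq_lia; lia.
    by move: H2 H3 H4; case: (l == 4*k-2); case: (l == 4*k-1); case: (l == 4*k).
- have Eps : Defs.Load m S :: Dist m S :: (xs ++ (blk m S k ++ ys)) =
     (Defs.Load m S :: Dist m S :: (xs ++ [:: vw (4 * k - 3); Dw m S k; vw (4 * k - 3)]))
       ++ vw l :: [:: Dw m S k] ++ vw l :: (drop 6 (blk m S k) ++ ys).
    by rewrite Hl /= -catA.
  rewrite Eps; apply: two_occ.
  + by move=> u; rewrite -Eps; apply: Hg.
  + rewrite (_ : Defs.Load m S :: Dist m S :: (xs ++ [:: vw (4 * k - 3); Dw m S k; vw (4 * k - 3)]) = [:: Defs.Load m S; Dist m S] ++ (xs ++ [:: vw (4 * k - 3); Dw m S k; vw (4 * k - 3)])) // mem_cat negb_or HL /= mem_cat negb_or Hxs /=.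
    rewrite !inE vw_inj vw_neq_plain ?notc1_D //.
    have H1 : l != 4 * k - 3 by apply: neq_lia; lia.
    by move: H1; case: (l == 4*k-3).
  + by rewrite inE vw_neq_plain ?notc1_D.
  + rewrite mem_cat negb_or Hys andbT /blk /= !inE !vw_inj !vw_neq_plain ?notc1_D ?notc1_E ?notc1_F //.
    have H3 : l != 4 * k - 1 by apply: neq_lia; lia.
    have H4 : l != 4 * k by apply: neq_lia; lia.
    by move: H3 H4; case: (l == 4*k-1); case: (l == 4*k).
Qed.

Lemma occ_pin w v t t' :
  (exists P1 P2, forall p, occurs_at w v p -> p = P1 \/ p = P2) ->
  occurs_at w v t -> occurs_at w v t' -> t < t' -> t' < size w ->
  first_occ w v = t /\ second_occ w v = t'.
Proof.
move=> [P1 [P2 HP]] Ht Ht' Hlt Hsz.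
have Hall : forall p, occurs_at w v p -> p = t \/ p = t'.
  move=> p Hp; have := HP p Hp; have := HP t Ht; have := HP t' Ht'; lia.
have Hf : first_occ w v = t.
  rewrite /first_occ (@find_iota _ 0 _ t) ?subn0 //; first lia.
  move=> p Hp; apply/negP => /Hall; lia.
split => //; rewrite /second_occ Hf (@find_iota _ t.+1 _ t') //; first lia.
- lia.
- move=> p Hp; apply/negP => /Hall; lia.
Qed.


Lemma steps_trans x y z : steps x y -> steps y z -> steps x z.
Proof. by elim=> // c c' c'' H _ IH Hz; apply: steps_cons H (IH Hz). Qed.

Lemma push_all (Q u T : word) : steps (Q, u ++ T) (Q ++ u, T).
Proof.
elim: u Q => [|s u IH] Q; first by rewrite cats0; apply: steps_refl.
apply: steps_cons (step_push Q s (u ++ T)) _.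
by rewrite -cat_rcons; apply: IH.
Qed.

Lemma pop_all (Q u T : word) : steps (u ++ Q, u ++ T) (Q, T).
Proof.
elim: u => [|s u IH]; first by apply: steps_refl.
exact: steps_cons (step_pop (u ++ Q) s (u ++ T)) IH.
Qed.

Lemma pp (s : sym) (Q T : word) : steps (s :: Q, s :: s :: T) (rcons Q s, T).
Proof.
apply: steps_cons (step_pop Q s (s :: T)) _.
exact: steps_cons (step_push Q s T) (steps_refl _).
Qed.

Lemma D_steps n (jj : seq nat) (Z T : word) : (forall j, j \in jj -> j <= n) ->
  steps (Ww jj ++ Z, wpow (Uw n) (size jj) ++ T) (Z ++ Ww [seq n - j | j <- jj], T).
Proof.
elim: jj Z => [|i jj IH] Z Hle; first by rewrite cats0; apply: steps_refl.
have Hi : i <= n by apply: Hle; rewrite mem_head.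
have E1 : Ww (i :: jj) ++ Z = a1 :: (nseq i sb ++ a2 :: (Ww jj ++ Z)).
  by rewrite /Ww /= -!catA.
have E2 : wpow (Uw n) (size jj).+1 ++ T = a1 :: a1 :: (nseq i sb ++
    (nseq (n - i) sb ++ a2 :: a2 :: (wpow (Uw n) (size jj) ++ T))).
  rewrite wpowS -catA; set R := wpow (Uw n) (size jj) ++ T.
  by rewrite /Uw -[in LHS](subnKC Hi) nseqD -!catA.
rewrite (_ : size (i :: jj) = (size jj).+1) // E1 E2.
apply: steps_trans (pp _ _ _) _.
rewrite rcons_cat; apply: steps_trans (pop_all _ _ _) _.
apply: steps_trans (push_all _ _ _) _.
rewrite rcons_cons cat_cons; apply: steps_trans (pp _ _ _) _.
have E3 : rcons (rcons (Ww jj ++ Z) a1 ++ nseq (n - i) sb) a2 =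
    Ww jj ++ (Z ++ a1 :: nseq (n - i) sb ++ [:: a2]).
  by rewrite -!cats1 -!catA.
rewrite E3; apply: steps_trans (IH _ _) _.
  by move=> j Hj; apply: Hle; rewrite inE Hj orbT.
have E4 : (Z ++ a1 :: nseq (n - i) sb ++ [:: a2]) ++ Ww [seq n - j | j <- jj] =
   Z ++ Ww [seq n - j | j <- i :: jj].
  by rewrite /Ww /= -!catA cat_cons -catA.
rewrite E4; exact: steps_refl.
Qed.


Lemma map_subK n (ii : seq nat) : (forall j, j \in ii -> j <= n) ->
  [seq n - j | j <- [seq n - j | j <- ii]] = ii.
Proof.
move=> H; rewrite -map_comp -[RHS]map_id; apply/eq_in_map => j /H Hj /=.
by rewrite subKn.
Qed.

Lemma converse m S k (ii : seq nat) : size ii = 3 * m - k + 1 ->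
  (forall j, j \in ii -> j <= nS S k) ->
  forall T : seq sym, steps (Ww ii, Xw m S k ++ T) (Ww ii, T).
Proof.
move=> Hsz Hle T.
set n := nS S k.
have EX : Xw m S k ++ T = vw (4*k-3) ++ (Dw m S k ++ (vw (4*k-3) ++ (vw (4*k-2) ++
   (Dw m S k ++ (vw (4*k-2) ++ T))))) by rewrite /Xw !catA.
rewrite EX.
have HD : Dw m S k = wpow (Uw n) (size ii) by rewrite Hsz.
rewrite HD.
apply: steps_trans (push_all _ _ _) _.
apply: steps_trans (D_steps _ _ Hle) _.
apply: steps_trans (pop_all _ _ _) _.
apply: steps_trans (push_all _ _ _) _.
have Hle2 : forall j, j \in [seq n - j | j <- ii] -> j <= n.
  by move=> j /mapP [x _ ->]; apply: leq_subr.
rewrite -(size_map (fun j => n - j) ii).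
apply: steps_trans (D_steps _ _ Hle2) _.
rewrite map_subK //.
exact: pop_all.
Qed.

Lemma drop_adv (w u z : word) s : drop s w = u ++ z -> drop (s + size u) w = z.
Proof. by move=> H; rewrite addnC -drop_drop H drop_size_cat. Qed.

Lemma seg_nth (w u z : word) s : drop s w = u ++ z ->
  forall j, j < size u -> nth a1 w (s + j) = nth a1 u j.
Proof. by move=> H j Hj; rewrite -nth_drop H nth_cat Hj. Qed.

Lemma drop_le (w u z : word) s : drop s w = u ++ z -> 0 < size u -> s + size u <= size w.
Proof.
move=> H Hu; have := f_equal size H; rewrite size_drop size_cat.
simpl in *; lia.
Qed.

Lemma a1_notin_vw l : (a1 \in vw l) = false.
Proof. by rewrite /vw !(inE, mem_cat, mem_nseq, andbF). Qed.

Lemma c1_notin_Ww jj : (c1 \in Ww jj) = false.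
Proof.
apply/negP => /flattenP [s /mapP [j _ ->]].
by rewrite !(inE, mem_cat, mem_nseq, andbF).
Qed.

Lemma forward m S k (ii : seq nat) : 1 <= k <= 3 * m -> size ii = 3 * m - k + 1 ->
  forall (tq : nat -> seq nat) (t : nat) (T W' : seq sym),
      accepting (wS m S) tq -> VCondition m S tq ->
      config_at (wS m S) tq t = (Ww ii, Xw m S k ++ T) ->
      config_at (wS m S) tq (t + size (Xw m S k)) = (W', T) ->
      W' = Ww ii /\ (forall j, j \in ii -> j <= nS S k).
Proof.
move=> Hk Hsz tq t T W' [H0 Hend Hvalid] HV Hc0 Hc6.
have Hq0 : queue_at (wS m S) tq t = Ww ii := f_equal fst Hc0.
have Hd0 : drop t (wS m S) = Xw m S k ++ T := f_equal snd Hc0.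
have Hq6 : queue_at (wS m S) tq (t + size (Xw m S k)) = W' := f_equal fst Hc6.
clear Hc0 Hc6.
set w := wS m S in Hvalid Hq0 Hd0 Hq6.
set n := nS S k.
set l1 := 4 * k - 3; set l2 := 4 * k - 2.
set v1 := vw l1; set v2 := vw l2; set D := Dw m S k.
have EX : Xw m S k = v1 ++ (D ++ (v1 ++ (v2 ++ (D ++ v2)))) by rewrite /Xw.
have EX2 : Xw m S k ++ T = v1 ++ (D ++ (v1 ++ (v2 ++ (D ++ (v2 ++ T))))) by rewrite /Xw !catA.
rewrite EX2 in Hd0.
set a := size v1; set d := size D; set b := size v2.
have Hd1 := drop_adv Hd0; rewrite -/a in Hd1.
have Hd2 := drop_adv Hd1; rewrite -/d in Hd2.
have Hd3 := drop_adv Hd2; rewrite -/a in Hd3.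
have Hd4 := drop_adv Hd3; rewrite -/b in Hd4.
have Hd5 := drop_adv Hd4; rewrite -/d in Hd5.
have Ha : a = (2 * l1).+2 by rewrite /a /v1 size_vw.
have Hb : b = (2 * l2).+2 by rewrite /b /v2 size_vw.
have Hb0 : 0 < size v2 by rewrite -/b Hb.
have Hlen := drop_le Hd5 Hb0; rewrite -/b in Hlen.
have Hval : forall s, s < t + a + d + a + b + d + b -> valid_step w tq s.
  by move=> s Hs; apply: Hvalid; lia.
have O1 := occ_intro Hd0; have O2 := occ_intro Hd2.
have O3 := occ_intro Hd3; have O4 := occ_intro Hd5.
have Ht1 : t < t + a + d by rewrite Ha; lia.
have Ht2 : t + a + d < size w by rewrite Hb in Hlen; lia.
have Ht3 : t + a + d + a < t + a + d + a + b + d by rewrite Hb; lia.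
have Ht4 : t + a + d + a + b + d < size w by rewrite Hb in Hlen; lia.
have [F1 S1] := occ_pin (occ_wS S Hk (or_introl erefl)) O1 O2 Ht1 Ht2.
have [F2 S2] := occ_pin (occ_wS S Hk (or_intror erefl)) O3 O4 Ht3 Ht4.
have Hpop1 : tq (t + a + d) = iota t a ++ tq (t + a + d + a).
  apply: vcond_pops => i Hi.
  have := HV l1 (ltac:(rewrite /l1; lia)) i Hi; rewrite /matched.
  by rewrite -/w -/v1 F1 S1.
have Hpop2 : tq (t + a + d + a + b + d) = iota (t + a + d + a) b ++ tq (t + a + d + a + b + d + b).
  apply: vcond_pops => i Hi.
  have := HV l2 (ltac:(rewrite /l2; lia)) i Hi; rewrite /matched.
  by rewrite -/w -/v2 F2 S2.
have Hii : ii = head 0 ii :: behead ii by move: Hsz; case: (ii) => //= Hs0; lia.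
have Hq0' : map (nth a1 w) (tq t) = Ww ii by [].
case Etq: (tq t) Hq0' => [|q0 Q] Hq0'.
  by rewrite Hii in Hq0'.
have Hsq0 : nth a1 w q0 = a1 by rewrite Hii /= in Hq0'; case: Hq0'.
have Hv1 : forall j, j < size v1 -> valid_step w tq (t + j).
  by move=> j Hj; apply: Hval; rewrite -/a in Hj; lia.
have Ph1 := all_push (seg_nth Hd0) Hv1 Etq
   (ltac:(by rewrite Hsq0 a1_notin_vw)) (leqnn a).
have Hiota1 : iota t a = t :: iota t.+1 (a - 1) by rewrite Ha.
have Hsy1 : nth a1 w t = c1 by rewrite -[t]addn0 (seg_nth Hd0) // Ha.
have Hv2 : forall j, j < size D -> valid_step w tq (t + a + j).
  by move=> j Hj; apply: Hval; rewrite -/d in Hj; lia.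
have [m1 [Hs1 Hm1 Hn1]] := D_phase (X := tq t) (seg_nth Hd1) Hv2
   (ltac:(by rewrite Ph1 Etq Hiota1))
   (ltac:(by rewrite Hpop1 Hiota1))
   (ltac:(by rewrite Hsy1 notc1_D))
   (ltac:(by rewrite Hsy1 Etq Hq0' c1_notin_Ww)).
rewrite Etq Hq0' in Hm1.
have HD : D = wpow (Uw n) (size ii) by rewrite Hsz.
rewrite HD in Hs1 Hm1 Hn1.
have [Hle HW1] := comb Hs1 Hm1.
rewrite HW1 in Hn1.
set jj := [seq n - j | j <- ii] in Hn1.
have Hjj : jj = head 0 jj :: behead jj by rewrite /jj; move: Hsz; case: (ii) => //= Hs0; lia.
case Etq3: (tq (t + a + d + a)) Hn1 => [|q1 Q1] Hn1.
  by rewrite Hjj in Hn1.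
have Hsq1 : nth a1 w q1 = a1 by rewrite Hjj /= in Hn1; case: Hn1.
have Hv3 : forall j, j < size v2 -> valid_step w tq (t + a + d + a + j).
  by move=> j Hj; apply: Hval; rewrite -/b in Hj; lia.
have Ph3 := all_push (seg_nth Hd3) Hv3 Etq3
   (ltac:(by rewrite Hsq1 a1_notin_vw)) (leqnn b).
have Hiota3 : iota (t + a + d + a) b = (t + a + d + a) :: iota (t + a + d + a).+1 (b - 1)
  by rewrite Hb.
have Hsy3 : nth a1 w (t + a + d + a) = c1 by rewrite -[t + a + d + a]addn0 (seg_nth Hd3) // Hb.
have Hv4 : forall j, j < size D -> valid_step w tq (t + a + d + a + b + j).
  by move=> j Hj; apply: Hval; rewrite -/d in Hj; lia.
have [m2 [Hs2 Hm2 Hn2]] := D_phase (X := tq (t + a + d + a)) (seg_nth Hd4) Hv4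
   (ltac:(by rewrite Ph3 Etq3 Hiota3))
   (ltac:(by rewrite Hpop2 Hiota3))
   (ltac:(by rewrite Hsy3 notc1_D))
   (ltac:(by rewrite Hsy3 Etq3 -Hn1 c1_notin_Ww)).
rewrite Etq3 -Hn1 HD in Hm2 Hn2; rewrite HD in Hs2.
rewrite -(size_map (fun j => n - j) ii) -/jj in Hs2 Hm2 Hn2.
have [_ HW2] := comb Hs2 Hm2.
rewrite HW2 /jj map_subK // in Hn2.
split => //.
rewrite -Hq6 /queue_at EX.
have -> : t + size (v1 ++ D ++ v1 ++ v2 ++ D ++ v2) = t + a + d + a + b + d + b.
  by rewrite (size_cat v1) (size_cat D) (size_cat v1) (size_cat v2) (size_cat D) -/a -/b -/d; lia.
by rewrite -Hn2.
Qed.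

Theorem lemma6 (m : nat) (S : seq nat) (k : nat) (ii : seq nat) :
  is3Part m S -> 1 <= k <= 3 * m -> size ii = 3 * m - k + 1 ->
  (forall (tq : nat -> seq nat) (t : nat) (T W' : seq sym),
      accepting (wS m S) tq -> VCondition m S tq ->
      config_at (wS m S) tq t = (Ww ii, Xw m S k ++ T) ->
      config_at (wS m S) tq (t + size (Xw m S k)) = (W', T) ->
      W' = Ww ii /\ (forall j, j \in ii -> j <= nS S k))
  /\
  ((forall j, j \in ii -> j <= nS S k) ->
      forall T : seq sym, steps (Ww ii, Xw m S k ++ T) (Ww ii, T)).
Proof.
move=> _ Hk Hsz; split; first exact: forward.
exact: converse.
Qed.
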